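(* In the standing setup below, assume that the restriction of $h$ to $\Omega$ is one-to-one and $0\notin h(\Omega)$. Assume also $M=1$, so that for each $\gamma\in\Omega$ one has $\mathcal X_\gamma=\{a x_\gamma: a\in\mathbb C\}$ with $x_\gamma:=x_\gamma^1$ satisfying $\mathcal T(g)x_\gamma=\gamma(g)x_\gamma$ for all $g\in\mathbb G$, and assume $Ax_\gamma\neq0$ for every $\gamma\in\Omega$. Then $R_{\min}=h(F)$. Moreover, $F=\{\gamma\in\Omega: h(\gamma)\in R_{\min}\}$ can be recovered from the measurements $y_0,y_1,\dots,y_{2\kappa-1}$.
   Context: Standing setup. Let $\mathbb G$ be a locally compact abelian group (written additively) with Haar measure $dg$ and Pontryagin dual $\widehat{\mathbb G}$ (the group of continuous unitary characters $\gamma:\mathbb G\to\mathbb T$). A weight is a measurable, locally bounded, even function $w:\mathbb G\to[1,\infty)$ with $w(g_1+g_2)\le w(g_1)w(g_2)$ for all $g_1,g_2$; it is assumed to satisfy the Beurling–Domar condition $\sum_{n=0}^\infty \frac{\ln w(ng)}{1+n^2}<\infty$ for all $g\in\mathbb G$, where $ng=g+\dots+g$ ($n$ times). $L_w(\mathbb G)$ is the Banach algebra of functions $f$ with $\|f\|_w=\int_{\mathbb G}|f(g)|w(g)\,dg<\infty$, with convolution as multiplication, and $\hat f(\gamma)=\int_{\mathbb G}f(g)\gamma(-g)\,dg$. Let $\mathcal X$ be a complex Banach space and $\mathcal T:\mathbb G\to B(\mathcal X)$ a strongly continuous group representation with $\|\mathcal T(g)\|\le w(g)$ for all $g$. $\mathcal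 X$ is an $L_w(\mathbb G)$-module via $fx=\int_{\mathbb G}f(g)\mathcal T(-g)x\,dg$, assumed non-degenerate ($fx=0$ for all $f$ implies $x=0$). The Beurling spectrum of $N\subseteq\mathcal X$ is $\Lambda(N)=\{\gamma\in\widehat{\mathbb G}:$ for every $f\in L_w(\mathbb G)$ with $\hat f(\gamma)\ne0$ there is $x\in N$ with $fx\neq0\}$; $\Lambda(x):=\Lambda(\{x\})$. For closed $F\subseteq\widehat{\mathbb G}$, $\mathcal X(F)=\{x\in\mathcal X:\Lambda(x)\subseteq F\}$ and $\mathcal X_\gamma:=\mathcal X(\{\gamma\})$. Fixed data: a set $\Omega\subseteq\widehat{\mathbb G}$ and integers $M,\kappa\ge1$ such that for every $\gamma\in\Omega$, $\mathcal X_\gamma$ has finite dimension $m_\gamma\le M$, with a basis $x_\gamma^1,\dots,x_\gamma^{m_\gamma}$. $F\subseteq\Omega$ is a finite set of cardinality $\kappa$ and $x=\sum_{\gamma\in F}\sum_{m=1}^{m_\gamma}c_{\gamma m}x_\gamma^m$ with $c_{\gamma m}\in\mathbb C$, where for each $\gamma\in F$ some $c_{\gamma m}\ne0$. $A:\mathcal X\to\mathbb C^S$ ($S\in\mathbb N$) is a linear operator and $B=\sum_{n=1}^N b_n\mathcal T(g_n)$ with $g_n\in\mathbb G$, $b_n\in\mathbb C\setminus\{0\}$; set $h(\gamma)=\sum_{n=1}^N b_n\gamma(g_n)$ for $\gamma\in\widehat{\mathbb G}$. The measurements are $y_\ell=AB^\ell x$, $\ell=0,1,2,\dots$. The polynomial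 $p_{\min}(z)=\sum_{\ell=0}^{\kappa M}\alpha_\ell z^\ell$ has coefficients satisfying $\alpha_{\kappa M}=1$ and $\sum_{\ell=0}^{\kappa M}\alpha_\ell y_{\ell+k}=0$ for all $k=0,1,2,\dots$; if such coefficients are not unique, one chooses those for which the largest possible number of initial coefficients vanish, $\alpha_0=\alpha_1=\dots=\alpha_j=0$ with $j$ maximal. $R_{\min}$ denotes the set of non-zero roots of $p_{\min}$. *)

(* Defs.v *)
From mathcomp Require Import all_boot all_order all_algebra.
From mathcomp Require Import complex.
From mathcomp Require Import boolp classical_sets reals.
Set Implicit Arguments. Unset Strict Implicit. Unset Printing Implicit Defensive.
Import Order.TTheory GRing.Theory Num.Theory.
Local Open Scope ring_scope.
Local Open Scope classical_set_scope.

Section Defs.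
Variable R : realType.
Local Notation C := R[i].

Definition is_character (G : zmodType) (gam : G -> C) : Prop :=
  (forall g1 g2, gam (g1 + g2) = gam g1 * gam g2) /\ (forall g, `|gam g| = 1).

Definition is_representation (G : zmodType) (X : lmodType C)
    (T : G -> {linear X -> X}) : Prop :=
  (forall v, T 0 v = v) /\ (forall g1 g2 v, T (g1 + g2) v = T g1 (T g2 v)).

Definition opB (G : zmodType) (X : lmodType C) (T : G -> {linear X -> X})
    (N : nat) (b : 'I_N -> C) (gs : 'I_N -> G) (v : X) : X :=
  \sum_(n < N) b n *: T (gs n) v.

Definition hfun (G : zmodType) (N : nat) (b : 'I_N -> C) (gs : 'I_N -> G)
    (gam : G -> C) : C :=
  \sum_(n < N) b n * gam (gs n).

Definition measurements (X : lmodType C) (S : nat) (A : {linear X -> 'cV[C]_S})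
    (B : X -> X) (x : X) (l : nat) : 'cV[C]_S :=
  A (iter l B x).

Definition annihilates_upto (S : nat) (y : nat -> 'cV[C]_S) (p : {poly C}) (n : nat) : Prop :=
  forall k, (k < n)%N -> \sum_(l < size p) p`_l *: y (l + k)%N = 0.

Definition annihilates (S : nat) (y : nat -> 'cV[C]_S) (p : {poly C}) : Prop :=
  forall k, \sum_(l < size p) p`_l *: y (l + k)%N = 0.

Definition n_init_zeros (p : {poly C}) : nat := find (fun a => a != 0) p.

Definition is_pmin (S : nat) (y : nat -> 'cV[C]_S) (d : nat) (p : {poly C}) : Prop :=
  [/\ size p = d.+1, p \is monic, annihilates y p &
      forall q : {poly C}, size q = d.+1 -> q \is monic -> annihilates y q ->
        (n_init_zeros q <= n_init_zeros p)%N].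

Definition nonzero_roots (p : {poly C}) : set C := [set z | z != 0 /\ root p z].

End Defs.

(* Main.v *)
Require Import Defs.
From mathcomp Require Import all_boot all_order all_algebra.
From mathcomp Require Import zify.

Import Order.TTheory GRing.Theory Num.Theory.
Local Open Scope ring_scope.

Lemma horner_sum_lem (K : fieldType) (V : lmodType K) n (lam : 'I_n -> K)
  (w : 'I_n -> V) (u : nat -> V) (q : {poly K}) :
  (forall l, u l = \sum_i lam i ^+ l *: w i) ->
  \sum_(l < size q) q`_l *: u l = \sum_i q.[lam i] *: w i.
Proof.
move=> Hu.
under eq_bigr => l _ do rewrite Hu scaler_sumr.
rewrite exchange_big /=; apply: eq_bigr => i _.
rewrite horner_coef scaler_suml; apply: eq_bigr => l _.
by rewrite scalerA.
Qed.

Lemma vander_lem (K : fieldType) (V : lmodType K) n (lam : 'I_n -> K)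
  (w : 'I_n -> V) : injective lam ->
  (forall k, (k < n)%N -> \sum_i lam i ^+ k *: w i = 0) -> forall j, w j = 0.
Proof.
move=> Hinj H0 j.
pose q := \prod_(i | i != j) ('X - (lam i)%:P).
have Hq : size q = n.
  rewrite /q size_prod; last by move=> i _; rewrite polyXsubC_eq0.
  under eq_bigr => i _ do rewrite size_XsubC.
  rewrite sum_nat_const cardC1 card_ord.
  case: n lam w H0 Hinj j {q} => [|n] lam w H0 Hinj j; first by case: j.
  rewrite /=; lia.
have E := @horner_sum_lem K V n lam w (fun l => \sum_i lam i ^+ l *: w i) q
  (fun l => erefl).
have : \sum_(l < size q) q`_l *: (\sum_i lam i ^+ l *: w i) = 0.
  by apply: big1 => l _; rewrite H0 ?scaler0 // -Hq.
rewrite E (bigD1 j) //= big1 ?addr0; last first.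
  move=> i Hij; rewrite /q horner_prod (bigD1 i) //= !hornerE subrr mul0r.
  by rewrite scale0r.
move/eqP; rewrite scaler_eq0 => /orP [|/eqP //].
rewrite /q horner_prod prodf_seq_eq0 => /hasP [i].
move=> _; case/andP=> Hij; rewrite !hornerE subr_eq0 => /eqP Hl.
by move: Hij; rewrite (Hinj _ _ Hl) eqxx.
Qed.
From mathcomp Require Import complex.
From mathcomp Require Import boolp classical_sets reals.
Local Open Scope classical_set_scope.

Theorem theorem2p2
  (R : realType) (G : zmodType) (X : lmodType R[i])
  (T : G -> {linear X -> X}) (HT : is_representation T)
  (Omega : set (G -> R[i])) (HOmega : forall gam, Omega gam -> is_character gam)
  (xg : (G -> R[i]) -> X)
  (Hxg : forall gam, Omega gam -> forall g, T g (xg gam) = gam g *: xg gam)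
  (kappa : nat) (Hkappa : (1 <= kappa)%N)
  (F : 'I_kappa -> (G -> R[i])) (HFinj : injective F)
  (HFO : forall i, Omega (F i))
  (c : 'I_kappa -> R[i]) (Hc : forall i, c i != 0)
  (S : nat) (A : {linear X -> 'cV[R[i]]_S})
  (N : nat) (b : 'I_N -> R[i]) (Hb : forall n, b n != 0) (gs : 'I_N -> G)
  (Hhinj : {in Omega &, injective (hfun b gs)})
  (Hh0 : forall gam, Omega gam -> hfun b gs gam != 0)
  (HA : forall gam, Omega gam -> A (xg gam) != 0) :
  let x := \sum_(i < kappa) c i *: xg (F i) in
  let y := measurements A (opB T b gs) x in
  (exists p, is_pmin y (kappa * 1) p) /\
  (forall p, is_pmin y (kappa * 1) p ->
     nonzero_roots p = hfun b gs @` range F /\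
     range F = [set gam | Omega gam /\ nonzero_roots p (hfun b gs gam)]) /\
  (forall p : {poly R[i]}, size p = kappa.+1 -> p \is monic ->
     annihilates_upto y p kappa ->
     range F = [set gam | Omega gam /\ nonzero_roots p (hfun b gs gam)]).
Proof.
move=> x y; rewrite muln1.
set h := hfun b gs.
pose lam i := h (F i).
pose v i := A (xg (F i)).
have Hlinj : injective lam.
  by move=> i j /Hhinj; rewrite !inE => /(_ (HFO i) (HFO j)) /HFinj.
have eig : forall gam, Omega gam -> opB T b gs (xg gam) = h gam *: xg gam.
  move=> gam Hg; rewrite /opB /h /hfun scaler_suml; apply: eq_bigr => n _.
  by rewrite Hxg // scalerA.
have Blin : forall a : 'I_kappa -> R[i],
    opB T b gs (\sum_i a i *: xg (F i)) = \sum_i (a i * lam i) *: xg (F i).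
  move=> a; rewrite {1}/opB.
  under eq_bigr => n _ do rewrite linear_sum scaler_sumr.
  rewrite exchange_big /=; apply: eq_bigr => i _.
  rewrite -scalerA -eig // /opB scaler_sumr; apply: eq_bigr => n _.
  by rewrite linearZ /= !scalerA mulrC.
have Hit : forall l, iter l (opB T b gs) x = \sum_i (c i * lam i ^+ l) *: xg (F i).
  elim=> [|l IH]; first by apply: eq_bigr => i _; rewrite expr0 mulr1.
  rewrite iterS IH Blin; apply: eq_bigr => i _; by rewrite exprSr mulrA.
have Hy : forall l, y l = \sum_i lam i ^+ l *: (c i *: v i).
  move=> l; rewrite /y /measurements Hit linear_sum; apply: eq_bigr => i _.
  by rewrite linearZ /= scalerA mulrC.
have Hann : forall (q : {poly R[i]}) k, \sum_(l < size q) q`_l *: y (l + k)%N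
    = \sum_i lam i ^+ k *: (q.[lam i] *: (c i *: v i)).
  move=> q k.
  have Hu : forall l, y (l + k)%N = \sum_i lam i ^+ l *: (lam i ^+ k *: (c i *: v i)).
    by move=> l; rewrite Hy; apply: eq_bigr => i _; rewrite exprD -scalerA.
  rewrite (@horner_sum_lem _ _ _ _ _ _ q Hu).
  by apply: eq_bigr => i _; rewrite !scalerA !mulrA [q.[_] * _]mulrC.
have Hroot : forall q, annihilates_upto y q kappa -> forall i, root q (lam i).
  move=> q Hq i.
  have := @vander_lem _ _ _ lam (fun i => q.[lam i] *: (c i *: v i)) Hlinj.
  case/(_ _ i)/Wrap => [k Hk|]; first by rewrite -Hann; apply: Hq.
  move/eqP; rewrite scaler_eq0 => /orP [//|]; rewrite scaler_eq0 (negbTE (Hc i)) /=.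
  by rewrite (negbTE (HA _ (HFO i))).
pose rs := [seq lam i | i <- enum 'I_kappa].
pose P := \prod_(z <- rs) ('X - z%:P).
have HPs : size P = kappa.+1 by rewrite size_prod_XsubC size_map size_enum_ord.
have HPm : P \is monic by apply: monic_prod_XsubC.
have HPr : forall z, root P z = (z \in rs) by move=> z; rewrite root_prod_XsubC.
have Huniq : forall q : {poly R[i]}, size q = kappa.+1 -> q \is monic ->
    annihilates_upto y q kappa -> q = P.
  move=> q Hs Hm Ha; apply/eqP; rewrite eq_sym -(eqp_monic HPm Hm).
  rewrite -dvdp_size_eqp; first by rewrite Hs HPs.
  apply: uniq_roots_dvdp.
    by apply/allP => z /mapP [i _ ->]; apply: Hroot.
  by rewrite uniq_rootsE map_inj_uniq ?enum_uniq.
have HPann : annihilates y P.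
  move=> k; rewrite Hann; apply: big1 => i _.
  have : root P (lam i) by rewrite HPr; apply: map_f; rewrite mem_enum.
  by move/eqP ->; rewrite !scale0r scaler0.
have Hrange : range F = [set gam | Omega gam /\ nonzero_roots P (h gam)].
  apply/seteqP; split => gam /=.
    case=> i _ <-; split => //; split; first exact: Hh0.
    by rewrite HPr; apply: map_f; rewrite mem_enum.
  case=> Og [_]; rewrite HPr => /mapP [i _ Hi].
  exists i => //; apply: Hhinj; rewrite ?inE //; exact: HFO.
split.
  exists P; split => // q Hs Hm Ha.
  by rewrite (Huniq q Hs Hm (fun k _ => Ha k)).
split.
  move=> p [Hs Hm Ha _]; rewrite (Huniq p Hs Hm (fun k _ => Ha k)); split => //.
  apply/seteqP; split => z /=.
    case=> _; rewrite HPr => /mapP [i _ ->].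
    by exists (F i) => //; exists i.
  case=> gam [i _ <-] <-; split; first exact: Hh0.
  by rewrite HPr; apply: map_f; rewrite mem_enum.
move=> p Hs Hm Ha; by rewrite (Huniq p Hs Hm Ha).
Qed.
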